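(* Each of the graphs $K_4, H_1, H_2, H_3, H_4, H_5, H_6, H_7, H_8, H_9$ is $4$-$\chi_\rho$-vertex-critical.
   Context: All graphs are finite and simple; $d(u,v)$ is the shortest-path distance. A $k$-packing coloring of $G$ is a map $c:V(G)\to\{1,\dots,k\}$ such that whenever $u\neq v$ and $c(u)=c(v)=i$, we have $d(u,v)>i$. $\chi_\rho(G)$ is the least $k$ such that $G$ has a $k$-packing coloring. $G$ is $4$-$\chi_\rho$-vertex-critical if $\chi_\rho(G)=4$ and $\chi_\rho(G-x)<4$ for every vertex $x$. $H_1$: vertices $a,b,c,d,e$; edges $ab,ad,ae,bd,de,bc$. $H_2$: vertices $a,b,c,d,e$; edges $ab,be,ea,bc,cd,db$. $H_3$: vertices $a,\dots,f$; edges $ab,bc,ca,ad,be,cf$. $H_4$: vertices $a,\dots,g$; edges $ab,bc,cd,de,ef,cg,dg$. $H_5$: vertices $a,\dots,f$; edges $ab,bc,cd,da,be,cf$. $H_6$: vertices $a,\dots,f$; edges $ab,be,ed,da,ac,ce,bf$. $H_7$: vertices $a,\dots,j$; edges $ab,bc,cd,de,ef,eg,gh,hi,ij,jb$. $H_8$: $H_7$ together with the additional edge $ai$. $H_9$: vertices $a,\dots,h$; edges $ab,bc,cd,de,bf,cg,dh$. *)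

(* Defs.v *)
From mathcomp Require Import all_boot.
Set Implicit Arguments. Unset Strict Implicit. Unset Printing Implicit Defensive.

(* A finite simple graph is given by a vertex set V : {set T} over a finType T
   and a symmetric irreflexive adjacency relation e : rel T; only the edges
   between vertices of V count (so removing a vertex x is V :\ x). *)
Definition simple_rel (T : finType) (e : rel T) : Prop :=
  irreflexive e /\ symmetric e.

(* d_G(u,v) <= k : there is a walk in G (all vertices in V) of length <= k
   from u to v.  Hence d(u,v) > k iff ~ dist_le V e u v k (covers d = oo). *)
Definition dist_le (T : finType) (V : {set T}) (e : rel T) (u v : T) (k : nat)
  : Prop :=
  exists p : seq T,
    [/\ u \in V, all (fun w => w \in V) p, path e u p, last u p = v
      & size p <= k].

Definition packing_coloring (T : finType) (V : {set T}) (e : rel T) (k : nat)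
  (c : T -> nat) : Prop :=
  (forall u, u \in V -> 1 <= c u <= k) /\
  (forall u v, u \in V -> v \in V -> u != v -> c u = c v ->
     ~ dist_le V e u v (c u)).

Definition has_packing (T : finType) (V : {set T}) (e : rel T) (k : nat) : Prop :=
  exists c : T -> nat, packing_coloring V e k c.

Definition packing_chromatic_eq (T : finType) (V : {set T}) (e : rel T)
  (k : nat) : Prop :=
  has_packing V e k /\ (forall j, j < k -> ~ has_packing V e j).

Definition vertex_critical (T : finType) (V : {set T}) (e : rel T) (k : nat)
  : Prop :=
  packing_chromatic_eq V e k /\
  (forall x, x \in V -> exists2 j, j < k & packing_chromatic_eq (V :\ x) e j).

Definition graph_of (n : nat) (es : seq (nat * nat)) : rel 'I_n :=
  fun u v => ((nat_of_ord u, nat_of_ord v) \in es) ||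
             ((nat_of_ord v, nat_of_ord u) \in es).
Arguments graph_of : clear implicits.

(* Vertices a,b,c,... are 0,1,2,... *)
Definition K4 : rel 'I_4 := fun u v => u != v.
Definition H1 : rel 'I_5 := graph_of 5 [:: (0,1); (0,3); (0,4); (1,3); (3,4); (1,2)].
Definition H2 : rel 'I_5 := graph_of 5 [:: (0,1); (1,4); (4,0); (1,2); (2,3); (3,1)].
Definition H3 : rel 'I_6 := graph_of 6 [:: (0,1); (1,2); (2,0); (0,3); (1,4); (2,5)].
Definition H4 : rel 'I_7 :=
  graph_of 7 [:: (0,1); (1,2); (2,3); (3,4); (4,5); (2,6); (3,6)].
Definition H5 : rel 'I_6 := graph_of 6 [:: (0,1); (1,2); (2,3); (3,0); (1,4); (2,5)].
Definition H6 : rel 'I_6 :=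
  graph_of 6 [:: (0,1); (1,4); (4,3); (3,0); (0,2); (2,4); (1,5)].
Definition H7_edges : seq (nat * nat) :=
  [:: (0,1); (1,2); (2,3); (3,4); (4,5); (4,6); (6,7); (7,8); (8,9); (9,1)].
Definition H7 : rel 'I_10 := graph_of 10 H7_edges.
Definition H8 : rel 'I_10 := graph_of 10 ((0,8) :: H7_edges).
Definition H9 : rel 'I_8 :=
  graph_of 8 [:: (0,1); (1,2); (2,3); (3,4); (1,5); (2,6); (3,7)].

(* Main.v *)
Require Import Defs.
From mathcomp Require Import all_boot.
Set Implicit Arguments. Unset Strict Implicit. Unset Printing Implicit Defensive.

Section Dec.
Variables (T : finType) (vs : seq T) (e : rel T).

Fixpoint reach (P : pred T) (u : T) (k : nat) : seq T :=
  if k is k'.+1 then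
    let r := reach P u k' in
    [seq w <- vs | (w \in r) || (P w && has (fun y => e y w) r)]
  else [seq w <- vs | P w && (w == u)].

Definition dlb P u v k := P u && (v \in reach P u k).

Definition okb P k (c : T -> nat) :=
  all (fun u => P u ==> (1 <= c u <= k)) vs &&
  all (fun u => P u ==> all (fun v => P v ==>
        (((u != v) && (c u == c v)) ==> ~~ dlb P u v (c u))) vs) vs.

Definition compat P x col (acc : seq (T * nat)) :=
  all (fun p => (p.1 == x) || (p.2 != col) || ~~ dlb P x p.1 col) acc.

Fixpoint search P k (s : seq T) (acc : seq (T * nat)) : option (seq (T * nat)) :=
  match s with
  | [::] => Some acc
  | x :: s' =>
    let fix try cols :=
      match cols with
      | [::] => None
      | col :: cs =>
        if compat P x col acc then
          (if search P k s' ((x, col) :: acc) is Some a then Some a else try cs)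
        else try cs
      end in try (iota 1 k)
  end.

Fixpoint get (a : seq (T * nat)) (u : T) : nat :=
  if a is p :: a' then (if p.1 == u then p.2 else get a' u) else 0.

Definition sP (P : pred T) := [seq x <- vs | P x].

Definition peq_b P k :=
  okb P k (get (odflt [::] (search P k (sP P) [::]))) &&
  all (fun j => ~~ isSome (search P j (sP P) [::])) (iota 0 k).

Definition crit_b P k :=
  peq_b P k &&
  all (fun x => P x ==> has (fun j => peq_b (fun w => (w != x) && P w) j) (iota 0 k)) vs.


Hypothesis hvs : forall x : T, x \in vs.

Lemma reach_P P u k w : w \in reach P u k -> P w.
Proof.
elim: k w => [|k IH] w /=; rewrite mem_filter.
  by case/andP=> /andP[].
case/andP=> /orP[/IH //|/andP[]//].
Qed.

Lemma reach_S P u k w : w \in reach P u k -> w \in reach P u k.+1.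
Proof. by move=> H; rewrite /= mem_filter H hvs. Qed.

Lemma reach_le P u k m w : k <= m -> w \in reach P u k -> w \in reach P u m.
Proof.
move=> /subnK <-; elim: (m - k) => [//|d IH] H.
by rewrite addSn; apply: reach_S; apply: IH.
Qed.

Lemma dlbP (V : {set T}) P (hV : forall w, (w \in V) = P w) u v k :
  dist_le V e u v k <-> dlb P u v k.
Proof.
split.
  case=> p [Hu Hall Hpath Hlast Hsize].
  rewrite /dlb -hV Hu /=.
  elim/last_ind: p v k Hall Hpath Hlast Hsize => [|p w IH] v k Hall Hpath Hlast Hsize.
    rewrite /= in Hlast; subst v.
    apply: (@reach_le _ _ 0); first by [].
    by rewrite /= mem_filter eqxx -hV Hu hvs.
  rewrite all_rcons in Hall; case/andP: Hall => Hw Hall.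
  rewrite rcons_path in Hpath; case/andP: Hpath => Hpath He.
  rewrite last_rcons in Hlast; subst v.
  rewrite size_rcons in Hsize.
  case: k Hsize => [//|k] Hsize.
  have Hl := IH (last u p) k Hall Hpath erefl Hsize.
  rewrite /= mem_filter hvs andbT; apply/orP; right.
  rewrite -hV Hw /=; apply/hasP; exists (last u p) => //.
case/andP=> Hu; elim: k v => [|k IH] v /=; rewrite mem_filter.
  case/andP=> /andP[_ /eqP ->] _; exists [::]; split => //; by rewrite hV.
case/andP=> /orP[/IH [p [H1 H2 H3 H4 H5]]|/andP[Pv /hasP[y Hy Hyv]]] _.
  by exists p; split => //; apply: leqW.
have [p [H1 H2 H3 H4 H5]] := IH y Hy.
exists (rcons p v); split => //.
- by rewrite all_rcons H2 hV Pv.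
- by rewrite rcons_path H3 H4.
- by rewrite last_rcons.
- by rewrite size_rcons.
Qed.

Lemma okbP (V : {set T}) P (hV : forall w, (w \in V) = P w) k c :
  okb P k c -> packing_coloring V e k c.
Proof.
case/andP=> /allP H1 /allP H2; split.
  by move=> u; rewrite hV => Pu; have := H1 u (hvs u); rewrite Pu.
move=> u v; rewrite !hV => Pu Pv uv cuv.
have := H2 u (hvs u); rewrite Pu /= => /allP /(_ v (hvs v)).
rewrite Pv uv cuv eqxx /= => /negP Hn; move/(dlbP hV); exact: Hn.
Qed.

Lemma search_complete (V : {set T}) P (hV : forall w, (w \in V) = P w) k c :
  packing_coloring V e k c ->
  forall s acc, (forall x, x \in s -> P x) ->
  (forall p, p \in acc -> c p.1 = p.2 /\ P p.1) ->
  isSome (search P k s acc).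
Proof.
case=> Hr Hd; elim=> [//|x s IH] acc Hs Hacc /=.
have Px : P x by apply: Hs; rewrite inE eqxx.
have : c x \in iota 1 k.
  by rewrite mem_iota add1n ltnS; apply: Hr; rewrite hV.
elim: (iota 1 k) => [//|col cs IHc].
rewrite inE; case: eqP => [<- _|_ /= /IHc Hc].
  have Hcomp : compat P x (c x) acc.
    apply/allP=> [[y cy]] Hy /=.
    have [Ecy Py] := Hacc _ Hy; rewrite /= in Ecy Py.
    case: eqP => [//|/eqP yx] /=; case: eqP => [Ecx|//] /=.
    apply/negP => /(dlbP hV) D.
    apply: (Hd x y); rewrite ?hV //; first by rewrite eq_sym.
    by rewrite Ecy.
  rewrite Hcomp.
  have : isSome (search P k s ((x, c x) :: acc)).
    apply: IH.
      by move=> z Hz; apply: Hs; rewrite inE Hz orbT.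
    move=> p; rewrite inE => /orP[/eqP -> //|/Hacc //].
  by case: (search P k s ((x, c x) :: acc)).
by case: (compat P x col acc) => //; case: (search _ _ _ _).
Qed.

Lemma peq_bP (V : {set T}) P (hV : forall w, (w \in V) = P w) k :
  peq_b P k -> packing_chromatic_eq V e k.
Proof.
case/andP=> H1 /allP H2; split.
  by exists (get (odflt [::] (search P k (sP P) [::]))); apply: (okbP hV).
move=> j jk [c Hc].
have := H2 j; rewrite mem_iota add0n => /(_ jk).
rewrite (search_complete hV Hc) //.
by move=> x; rewrite mem_filter => /andP[].
Qed.

Lemma crit_bP (V : {set T}) P (hV : forall w, (w \in V) = P w) k :
  crit_b P k -> vertex_critical V e k.
Proof.
case/andP=> H1 /allP H2; split; first exact: (peq_bP hV).
move=> x; rewrite hV => Px.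
have := H2 x (hvs x); rewrite Px /= => /hasP[j]; rewrite mem_iota add0n => jk Hj.
exists j => //; apply: (peq_bP _ Hj) => w.
by rewrite in_setD1 hV.
Qed.

End Dec.

Fixpoint mk (n k : nat) : k <= n -> seq 'I_n :=
  match k with 0 => fun _ => [::] | k'.+1 => fun h => Ordinal h :: mk (ltnW h) end.
Definition ords n := mk (leqnn n).

Lemma ords_all n (x : 'I_n) : x \in ords n.
Proof.
suff H : forall k (h : k <= n), x < k -> x \in mk h by apply: H.
elim=> [//|k IH] h xk /=.
rewrite inE; case: (ltngtP x k) => [xl|kx|xe].
- by rewrite IH ?orbT.
- by rewrite ltnS leqNgt kx in xk.
- by apply/orP; left; apply/eqP/val_inj.
Qed.

Lemma critT n (e : rel 'I_n) : crit_b (ords n) e (fun _ => true) 4 ->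
  vertex_critical [set: 'I_n] e 4.
Proof. by apply: crit_bP => // [x|w]; rewrite ?ords_all ?in_setT. Qed.

Theorem mainTheorem3 :
  vertex_critical [set: 'I_4] K4 4 /\
  vertex_critical [set: 'I_5] H1 4 /\
  vertex_critical [set: 'I_5] H2 4 /\
  vertex_critical [set: 'I_6] H3 4 /\
  vertex_critical [set: 'I_7] H4 4 /\
  vertex_critical [set: 'I_6] H5 4 /\
  vertex_critical [set: 'I_6] H6 4 /\
  vertex_critical [set: 'I_10] H7 4 /\
  vertex_critical [set: 'I_10] H8 4 /\
  vertex_critical [set: 'I_8] H9 4.
Proof.
repeat match goal with |- _ /\ _ => split end;
  apply: critT; vm_compute; reflexivity.
Qed.
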